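(* Let $q$ be a prime power and $M$ an $n\times n$ matrix over $\mathbb{F}_{q^2}$. Then $\sharp(\mathrm{Num}_0(M))=\sharp(\mathrm{Num}_0(M^\dagger))$, and, if $n\ge 2$, $\sharp(\mathrm{Num}'_0(M))=\sharp(\mathrm{Num}'_0(M^\dagger))$.
   Context: The Hermitian form on $\mathbb{F}_{q^2}^n$ is $\langle u,v\rangle=\sum_i u_i^q v_i$. For $N=(n_{ij})$, $N^\dagger=(n_{ji}^q)$. $\mathrm{Num}_0(M)=\{\langle u,Mu\rangle: u\in\mathbb{F}_{q^2}^n,\ \langle u,u\rangle=0\}$ and, for $n\ge 2$, $\mathrm{Num}'_0(M)=\{\langle u,Mu\rangle: u\in\mathbb{F}_{q^2}^n\setminus\{0\},\ \langle u,u\rangle=0\}$. *)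

(* Defs.v *)
From mathcomp Require Import all_boot all_order all_algebra all_field.
Set Implicit Arguments. Unset Strict Implicit. Unset Printing Implicit Defensive.
Import GRing.Theory.
Local Open Scope ring_scope.

(* F is a finite field with q^2 elements (i.e. F = F_{q^2}); vectors are column vectors. *)

Definition herm (F : finFieldType) (q n : nat) (u v : 'cV[F]_n) : F :=
  \sum_(i < n) (u i 0) ^+ q * v i 0.

Definition hdag (F : finFieldType) (q n : nat) (M : 'M[F]_n) : 'M[F]_n :=
  \matrix_(i, j) (M j i) ^+ q.

Definition Num0 (F : finFieldType) (q n : nat) (M : 'M[F]_n) : {set F} :=
  [set herm q u (M *m u) | u in [set u : 'cV[F]_n | herm q u u == 0]].

Definition Num0' (F : finFieldType) (q n : nat) (M : 'M[F]_n) : {set F} :=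
  [set herm q u (M *m u) | u in [set u : 'cV[F]_n | (u != 0) && (herm q u u == 0)]].

(* Main.v *)
Require Import Defs.
From mathcomp Require Import all_boot all_order all_algebra all_field.
Local Open Scope ring_scope.
Import GRing.Theory.

Section S.
Variables (F : finFieldType) (p k q : nat).
Hypotheses (hp : prime p) (hk : (0 < k)%N) (hq : q = (p ^ k)%N)
  (hF : #|F| = (q ^ 2)%N).

Let sig (x : F) := x ^+ q.

Lemma sigK : cancel sig sig.
Proof. by move=> x; rewrite /sig -exprM mulnn -hF expf_card. Qed.

Lemma sigD (x y : F) : sig (x + y) = sig x + sig y.
Proof.
have pc : p \in [pchar F].
  by apply: (@card_finPcharP _ p (k * 2)) => //; rewrite hF hq expnM.
apply: exprDn_pchar.
rewrite hq (eq_pnat _ (pcharf_eq pc)) pnatX pnat_id //; by rewrite orbT.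
Qed.

Lemma sig0 : sig 0 = 0.
Proof.
have q0 : (0 < q)%N by rewrite hq expn_gt0 prime_gt0.
by rewrite /sig expr0n eqn0Ngt q0.
Qed.

Lemma sigK' (x : F) : x ^+ q ^+ q = x.
Proof. exact: sigK. Qed.

Lemma key n (M : 'M[F]_n) u : herm q u (hdag q M *m u) = sig (herm q u (M *m u)).
Proof.
rewrite /herm (big_morph sig sigD sig0).
transitivity (\sum_i \sum_j u i 0 ^+ q * (M j i ^+ q * u j 0)).
  apply: eq_bigr => i _; rewrite !mxE big_distrr; apply: eq_bigr => j _.
  by rewrite !mxE.
rewrite exchange_big /=; apply: eq_bigr => j _.
rewrite mxE /sig exprMn sigK' (big_morph (fun x : F => x ^+ q) sigD sig0) big_distrr /=.
apply: eq_bigr => i _; rewrite exprMn.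
by rewrite mulrC mulrA [_ * u j 0]mulrC -mulrA mulrC.
Qed.

End S.


Theorem lemma1 (F : finFieldType) (p k q n : nat)
  (hp : prime p) (hk : (0 < k)%N) (hq : q = (p ^ k)%N)
  (hF : #|F| = (q ^ 2)%N) (M : 'M[F]_n) :
  #|Num0 q M| = #|Num0 q (hdag q M)| /\
  ((2 <= n)%N -> #|Num0' q M| = #|Num0' q (hdag q M)|).
Proof.
have inj : injective (fun x : F => x ^+ q) := can_inj (sigK _ _ hF).
split; [|move=> _]; rewrite /Num0 /Num0';
  rewrite (eq_imset _ (key _ _ _ _ hp hq hF _ M));
  by rewrite -(card_imset _ inj) -imset_comp.
Qed.
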